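(* Let $\theta\in\mathbb{R}_{\ge0}^V$ be a feasible solution in a general weighted graph on $n=|V|$ vertices. Then $\|W\theta\|_1\ge n+\frac{\|\theta\|_1-\mathsf{OPT}}{\mathsf{OPT}}$.
   Context: $W=(W_{u,v})_{u,v\in V}$ is a symmetric matrix with entries in $[0,1]$ and $W_{v,v}=1$ (the weighted graph). A vector $\theta\in\mathbb{R}_{\ge0}^V$ is feasible if $W\theta\ge\mathbf 1$ coordinatewise. $\mathsf{OPT}=\min\{\|\theta\|_1:\theta\ge0,\ W\theta\ge\mathbf 1\}$. *)

(* Defs.v *)
From mathcomp Require Import all_boot all_order all_algebra.
Set Implicit Arguments. Unset Strict Implicit. Unset Printing Implicit Defensive.
Import Order.TTheory GRing.Theory Num.Theory.
Local Open Scope ring_scope.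

Definition weighted_graph (R : realFieldType) (n : nat) (W : 'M[R]_n) : Prop :=
  [/\ W^T = W,
      (forall u v, 0 <= W u v <= 1) &
      (forall v, W v v = 1)].

Definition norm1 (R : realFieldType) (n : nat) (x : 'cV[R]_n) : R :=
  \sum_(i < n) `|x i 0|.

Definition feasible (R : realFieldType) (n : nat) (W : 'M[R]_n) (theta : 'cV[R]_n) : Prop :=
  (forall i, 0 <= theta i 0) /\ (forall i, 1 <= (W *m theta) i 0).

Definition is_OPT (R : realFieldType) (n : nat) (W : 'M[R]_n) (OPT : R) : Prop :=
  (exists2 theta, feasible W theta & norm1 theta = OPT) /\
  (forall theta, feasible W theta -> OPT <= norm1 theta).

(* Main.v *)
Require Import Defs.
From mathcomp Require Import all_boot all_order all_algebra.
Import Order.TTheory GRing.Theory Num.Theory.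
Local Open Scope ring_scope.

Theorem lemma7p5 (R : realFieldType) (n : nat) (W : 'M[R]_n) (OPT : R)
  (theta : 'cV[R]_n) :
  weighted_graph W -> is_OPT W OPT -> feasible W theta ->
  n%:R + (norm1 theta - OPT) / OPT <= norm1 (W *m theta).
Proof.
move=> [WT W01 Wd] [[ts [ts0 ts1] tsO] _] [t0 t1].
have hS : norm1 (W *m theta) = \sum_(i < n) (W *m theta) i 0.
  by apply: eq_bigr => i _; rewrite ger0_norm // (le_trans ler01 (t1 i)).
have hT : norm1 theta = \sum_(i < n) theta i 0.
  by apply: eq_bigr => i _; rewrite ger0_norm.
have hO : OPT = \sum_(i < n) ts i 0.
  by rewrite -tsO; apply: eq_bigr => i _; rewrite ger0_norm.
have nS : n%:R <= \sum_(i < n) (W *m theta) i 0.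
  rewrite -[n in n%:R]card_ord -sumr_const; exact: ler_sum.
have O0 : 0 <= OPT by rewrite hO sumr_ge0.
have tsle : forall i, ts i 0 <= OPT.
  move=> i; rewrite hO (bigD1 i) //= lerDl sumr_ge0 //.
have key : \sum_(i < n) theta i 0 <= OPT + OPT * (\sum_(i < n) (W *m theta) i 0 - n%:R).
  apply: (@le_trans _ _ (\sum_(j < n) theta j 0 * (W *m ts) j 0)).
    by apply: ler_sum => j _; rewrite -{1}[theta j 0]mulr1 ler_wpM2l.
  have -> : \sum_(j < n) theta j 0 * (W *m ts) j 0 =
            \sum_(i < n) ts i 0 * (W *m theta) i 0.
    rewrite (eq_bigr (fun j => \sum_(i < n) theta j 0 * (W j i * ts i 0))); last first.
      by move=> j _; rewrite mxE mulr_sumr.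
    rewrite exchange_big /=; apply: eq_bigr => i _; rewrite mxE mulr_sumr.
    apply: eq_bigr => j _.
    have -> : W j i = W i j by rewrite -{1}WT mxE.
    by rewrite mulrCA mulrA [ts i 0 * _]mulrC.
  have -> : \sum_(i < n) ts i 0 * (W *m theta) i 0 =
            \sum_(i < n) ts i 0 + \sum_(i < n) ts i 0 * ((W *m theta) i 0 - 1).
    by rewrite -big_split /=; apply: eq_bigr => i _; rewrite mulrBr mulr1 addrC subrK.
  rewrite -hO lerD2l.
  have -> : \sum_(i < n) (W *m theta) i 0 - n%:R = \sum_(i < n) ((W *m theta) i 0 - 1).
    by rewrite sumrB sumr_const card_ord.
  rewrite mulr_sumr; apply: ler_sum => i _; apply: ler_wpM2r.
    by rewrite subr_ge0.
  exact: tsle.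
rewrite hS hT.
have [->|Onz] := eqVneq OPT 0.
  by rewrite invr0 mulr0 addr0.
have Op : 0 < OPT by rewrite lt_def Onz.
rewrite -lerBrDl ler_pdivrMr // mulrC lerBlDl.
by [].
Qed.
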